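(* Let $d\in\mathbb{Z}_{>0}$ and $X=\begin{pmatrix}z\sqrt\epsilon&u\sqrt\epsilon\\ v\sqrt\epsilon&z\sqrt\epsilon\end{pmatrix}\in\mathfrak{k}_{-d}$ with $z,u,v\in F$ such that $\nu(z),\nu(v)>-\lceil\frac d2\rceil$ and $\nu(u)=-d$. Let $X_u=\begin{pmatrix}0&u\sqrt\epsilon\\0&0\end{pmatrix}$. Then $\Psi_X=\Psi_{X_u}$ as characters of $\mathcal{J}_d$, and $T(X)\mathcal{J}_d=T(X_u)\mathcal{J}_d=Z\mathcal{U}\mathcal{J}_d$.
   Context: $F$ non-archimedean local field, $p\neq2$, uniformiser $\varpi$, valuation $\nu$; $E=F[\sqrt\epsilon]$ unramified quadratic. $G=\mathbb{U}(1,1)(F)$ (hermitian form $\mathrm{w}=\begin{pmatrix}0&1\\1&0\end{pmatrix}$) with center $Z$ (scalar matrices, $\cong E^1$), $\mathcal{K}=G\cap M_2(\mathcal{O}_E)$, $\mathcal{U}=\left\{\begin{pmatrix}1&\sqrt\epsilon b\\0&1\end{pmatrix}:b\in F\right\}\cap\mathcal{K}$. $\mathfrak{k}_{-d}$: elements of the Lie algebra with diagonal entries in $\mathfrak{p}_E^{-d}$ and off-diagonal entries in $\sqrt\epsilon\mathfrak{p}_F^{-d}$. $\mathcal{J}_d=\begin{pmatrix}1+\mathfrak{p}_E^{\lceil d/2\rceil}&\mathfrak{p}_E^{\lceil d/2\rceil}\\ \mathfrak{p}_E^{\lceil (d+1)/2\rceil}&1+\mathfrak{p}_E^{\lceil d/2\rceil}\end{pmatrix}\cap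 G$. $\psi$: additive character of $E$ trivial on $\mathfrak{p}_E$, nontrivial on $\mathcal{O}_E$; $\Psi_Y(k)=\psi(\mathrm{Tr}(Y(k-I)))$. $T(Y)$ denotes the centralizer of $Y$ in $\mathcal{K}$. *)

(* Defs.v *)
From HB Require Import structures.
From mathcomp Require Import all_boot all_order all_algebra algC.
Set Implicit Arguments. Unset Strict Implicit. Unset Printing Implicit Defensive.
Import Order.TTheory GRing.Theory Num.Theory.
Local Open Scope ring_scope.

(* nu : F -> int is the valuation on nonzero elements (its value at 0 is junk).
   [inP nu n x] means x \in p_F^n, i.e. x = 0 or nu x >= n (n : int). *)
Definition inP (F : fieldType) (nu : F -> int) (n : int) (x : F) : Prop :=
  x = 0 \/ n <= nu x.

Record nonarch_local_field (F : fieldType) (nu : F -> int) : Prop := {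
  nuM : forall x y : F, x != 0 -> y != 0 -> nu (x * y) = nu x + nu y;
  nuD : forall x y : F, x != 0 -> y != 0 -> x + y != 0 ->
          Num.min (nu x) (nu y) <= nu (x + y);
  nu_unif : exists varpi : F, varpi != 0 /\ nu varpi = 1;
  nu_complete : forall a : nat -> F,
     (forall N : int, exists M : nat, forall m n : nat, (M <= m)%N -> (M <= n)%N ->
          inP nu N (a m - a n)) ->
     exists l : F, forall N : int, exists M : nat, forall n : nat, (M <= n)%N ->
          inP nu N (a n - l);
  residue_finite : exists r : seq F, forall x : F, inP nu 0 x ->
          exists2 y, y \in r & inP nu 1 (x - y);
  residue_char_not2 : (2 : F) != 0 /\ nu 2 = 0
}.

Record unram_quad (F E : fieldType) (nu : F -> int) (iota : {rmorphism F -> E})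
    (eps : F) (s : E) (sigma : {rmorphism E -> E}) : Prop := {
  eps_unit : eps != 0 /\ nu eps = 0;
  eps_nonsq : forall a : F, a ^+ 2 != eps;
  s_sq : s ^+ 2 = iota eps;
  E_span : forall e : E, exists a b : F, e = iota a + iota b * s;
  sigma_F : forall a : F, sigma (iota a) = iota a;
  sigma_s : sigma s = - s
}.

(* p_E^n : a + b sqrt eps with a, b in p_F^n (E/F unramified) *)
Definition pE (F E : fieldType) (nu : F -> int) (iota : {rmorphism F -> E}) (s : E)
    (n : int) (e : E) : Prop :=
  exists a b : F, e = iota a + iota b * s /\ inP nu n a /\ inP nu n b.

Record add_char (F E : fieldType) (nu : F -> int) (iota : {rmorphism F -> E}) (s : E)
    (psi : E -> algC) : Prop := {
  psiD : forall x y : E, psi (x + y) = psi x * psi y;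
  psi_pE : forall x : E, pE nu iota s 1 x -> psi x = 1;
  psi_OE : exists x : E, pE nu iota s 0 x /\ psi x != 1
}.

Definition mx2 (R : Type) (a b c d : R) : 'M[R]_2 :=
  \matrix_(i < 2, j < 2)
    if (i == 0 :> nat) then (if (j == 0 :> nat) then a else b)
    else (if (j == 0 :> nat) then c else d).

Definition wform (E : fieldType) : 'M[E]_2 := mx2 0 1 1 0.

Definition adjm (E : fieldType) (sigma : {rmorphism E -> E}) (g : 'M[E]_2) : 'M[E]_2 :=
  (map_mx sigma g)^T.

Definition inG (E : fieldType) (sigma : {rmorphism E -> E}) (g : 'M[E]_2) : Prop :=
  adjm sigma g *m wform E *m g = wform E.

Definition inK (F E : fieldType) (nu : F -> int) (iota : {rmorphism F -> E}) (s : E)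
    (sigma : {rmorphism E -> E}) (g : 'M[E]_2) : Prop :=
  inG sigma g /\ forall i j, pE nu iota s 0 (g i j).

Definition inZ (E : fieldType) (sigma : {rmorphism E -> E}) (g : 'M[E]_2) : Prop :=
  (exists l : E, g = l%:M) /\ inG sigma g.

Definition inU (F E : fieldType) (nu : F -> int) (iota : {rmorphism F -> E}) (s : E)
    (sigma : {rmorphism E -> E}) (g : 'M[E]_2) : Prop :=
  (exists b : F, g = mx2 1 (s * iota b) 0 1) /\ inK nu iota s sigma g.

Definition inJ (F E : fieldType) (nu : F -> int) (iota : {rmorphism F -> E}) (s : E)
    (sigma : {rmorphism E -> E}) (d : nat) (g : 'M[E]_2) : Prop :=
  inG sigma g /\
  exists a b c e : E, g = mx2 a b c e /\
    pE nu iota s (Posz (uphalf d)) (a - 1) /\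
    pE nu iota s (Posz (uphalf d)) b /\
    pE nu iota s (Posz (uphalf d.+1)) c /\
    pE nu iota s (Posz (uphalf d)) (e - 1).

Definition inLie (E : fieldType) (sigma : {rmorphism E -> E}) (X : 'M[E]_2) : Prop :=
  adjm sigma X *m wform E + wform E *m X = 0.

Definition in_kfrak (F E : fieldType) (nu : F -> int) (iota : {rmorphism F -> E}) (s : E)
    (sigma : {rmorphism E -> E}) (d : nat) (X : 'M[E]_2) : Prop :=
  inLie sigma X /\
  exists a b c e : E, X = mx2 a b c e /\
    pE nu iota s (- Posz d) a /\ pE nu iota s (- Posz d) e /\
    (exists b' : F, b = s * iota b' /\ inP nu (- Posz d) b') /\
    (exists c' : F, c = s * iota c' /\ inP nu (- Posz d) c').

Definition inT (F E : fieldType) (nu : F -> int) (iota : {rmorphism F -> E}) (s : E)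
    (sigma : {rmorphism E -> E}) (Y k : 'M[E]_2) : Prop :=
  inK nu iota s sigma k /\ k *m Y = Y *m k.

Definition PsiY (E : fieldType) (psi : E -> algC) (Y k : 'M[E]_2) : algC :=
  psi (\tr (Y *m (k - 1%:M))).

Definition setmul (E : fieldType) (A B : 'M[E]_2 -> Prop) (g : 'M[E]_2) : Prop :=
  exists a b, A a /\ B b /\ g = a *m b.

(* Main.v *)
Require Import Defs.
From HB Require Import structures.
From mathcomp Require Import all_boot all_order all_algebra algC.
From mathcomp Require Import zify ring lra.
Set Implicit Arguments. Unset Strict Implicit. Unset Printing Implicit Defensive.
Import Order.TTheory GRing.Theory Num.Theory.
Local Open Scope ring_scope.


Section FF.
Variables (F : fieldType) (nu : F -> int).
Hypothesis HF : nonarch_local_field nu.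

Lemma nu1 : nu 1 = 0.
Proof.
have := nuM HF (oner_neq0 F) (oner_neq0 F); rewrite mulr1 => h.
by apply: (addrI (nu 1)); rewrite addr0 -h.
Qed.

Lemma nuN1 : nu (-1) = 0.
Proof.
have n1 : (-1 : F) != 0 by rewrite oppr_eq0 oner_eq0.
have := nuM HF n1 n1; rewrite mulrNN mulr1 nu1 => h.
lia.
Qed.

Lemma nuN x : x != 0 -> nu (- x) = nu x.
Proof.
move=> x0; have n1 : (-1 : F) != 0 by rewrite oppr_eq0 oner_eq0.
by rewrite -mulN1r (nuM HF n1 x0) nuN1 add0r.
Qed.

Lemma nuV x : x != 0 -> nu (x^-1) = - nu x.
Proof.
move=> x0; have := nuM HF (invr_neq0 x0) x0; rewrite mulVf // nu1 => h; lia.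
Qed.

Lemma inP0 n : inP nu n 0. Proof. by left. Qed.
Lemma inP1 : inP nu 0 1. Proof. by right; rewrite nu1. Qed.

Lemma inP_mono n m x : n <= m -> inP nu m x -> inP nu n x.
Proof. move=> le [->|h]; [by left| right; exact: le_trans h]. Qed.

Lemma inPN n x : inP nu n x -> inP nu n (- x).
Proof. case=> [->|h]; [by left; rewrite oppr0|].
case: (eqVneq x 0) => [->|x0]; [by left; rewrite oppr0| by right; rewrite nuN]. Qed.

Lemma inPD n x y : inP nu n x -> inP nu n y -> inP nu n (x + y).
Proof.
case=> [->|hx]; first by rewrite add0r.
case=> [->|hy]; first by rewrite addr0; right.
case: (eqVneq x 0) => [->|x0]; first by rewrite add0r; right.
case: (eqVneq y 0) => [->|y0]; first by rewrite addr0; right.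
case: (eqVneq (x + y) 0) => [->|xy0]; first by left.
right; apply: le_trans (nuD HF x0 y0 xy0).
by rewrite le_min hx hy.
Qed.

Lemma inPB n x y : inP nu n x -> inP nu n y -> inP nu n (x - y).
Proof. by move=> hx hy; apply: inPD => //; apply: inPN. Qed.

Lemma inPM n m x y : inP nu n x -> inP nu m y -> inP nu (n + m) (x * y).
Proof.
case=> [->|hx]; first by rewrite mul0r; left.
case=> [->|hy]; first by rewrite mulr0; left.
case: (eqVneq x 0) => [->|x0]; first by rewrite mul0r; left.
case: (eqVneq y 0) => [->|y0]; first by rewrite mulr0; left.
by right; rewrite (nuM HF x0 y0); apply: lerD.
Qed.

Lemma inPMu n x y : x != 0 -> nu x = 0 -> inP nu n y -> inP nu n (x * y).
Proof. move=> x0 nx hy; have hx : inP nu 0 x by right; rewrite nx.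
by have := inPM hx hy; rewrite add0r. Qed.

Lemma inP_zero x : (forall N, inP nu N x) -> x = 0.
Proof.
move=> h; case: (h (nu x + 1)) => // hx; exfalso; move: hx.
generalize (nu x); move=> a; lia.
Qed.


Lemma two_unit : (2 : F) != 0 /\ nu 2 = 0.
Proof. exact: residue_char_not2 HF. Qed.

Lemma inP_half n x : inP nu n x -> inP nu n (x / 2).
Proof.
move=> h; case: two_unit => t0 t1; rewrite mulrC; apply: inPMu => //.
  by rewrite invr_eq0.
by rewrite nuV // t1.
Qed.

Fixpoint hy (x : F) (k : nat) : F := if k is k'.+1 then (x - hy x k' ^+ 2) / 2 else 0.

Lemma hensel1 (m : int) x : 1 <= m -> inP nu m x ->
  exists r, r ^+ 2 = 1 + x /\ inP nu m (r - 1).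
Proof.
move=> m1 hx.
have m0 : 0 <= m by apply: le_trans m1.
have ya : forall k, inP nu m (hy x k).
  elim=> [|k IH] /=; first exact: inP0.
  apply: inP_half; apply: inPB => //; rewrite expr2.
  by apply: (inP_mono (m := m + m)); [rewrite lerDl|apply: inPM].
have yb : forall k : nat, inP nu (k%:Z + m) (hy x k.+1 - hy x k).
  elim=> [|k IH]; first by apply: (inP_mono (m := m)); [lia| rewrite /= subr0 expr2 mulr0 subr0; apply: inP_half].
  move: IH; set k1 := k.+1 => IH.
  have -> : hy x k.+2 - hy x k.+1 = (hy x k - hy x k.+1) * (hy x k + hy x k.+1) / 2.
    rewrite /= -mulrBl; congr (_ / 2); ring.
  apply: inP_half; apply: (inP_mono (m := k%:Z + m + m)).
    lia.
  apply: inPM => //; last by apply: inPD.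
  by rewrite -opprB; apply: inPN.
have yc : forall (a j : nat), inP nu (a%:Z + m) (hy x (a + j) - hy x a).
  move=> a; elim=> [|j IH]; first by rewrite addn0 subrr; apply: inP0.
  have -> : hy x (a + j.+1) - hy x a = (hy x (a + j).+1 - hy x (a + j)) + (hy x (a + j) - hy x a).
    by rewrite addnS; ring.
  apply: inPD => //; apply: inP_mono (yb _); rewrite lerD2r; lia.
have [l hl] : exists l, forall N : int, exists M : nat, forall n : nat, (M <= n)%N ->
          inP nu N (hy x n - l).
  apply: (nu_complete HF) => N; exists `|N|%N => m2 n2 hm hn.
  have -> : hy x m2 - hy x n2 = (hy x (`|N|%N + (m2 - `|N|)) - hy x `|N|%N)
                                 - (hy x (`|N|%N + (n2 - `|N|)) - hy x `|N|%N).
    by rewrite !subnKC //; ring.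
  apply: (inP_mono (m := `|N|%N%:Z + m)); last by apply: inPB.
  lia.
have lm : inP nu m l.
  have [M hM] := hl m; have := inPB (ya M) (hM M (leqnn M)).
  by rewrite opprB addrC subrK.
exists (1 + l); split; last by rewrite addrAC subrr add0r.
apply/eqP; rewrite -subr_eq0; apply/eqP; apply: inP_zero => N.
have [M hM] := hl `|N|%N.
have e : (1 + l) ^+ 2 - (1 + x) = 2 * (l - hy x M.+1) + (l - hy x M) * (l + hy x M).
  rewrite /=; have [t0 _] := two_unit.
  have -> : 2 * (l - (x - hy x M ^+ 2) / 2) = 2 * l - (x - hy x M ^+ 2).
    by rewrite mulrBr mulrCA divff // mulr1.
  ring.
rewrite e; apply: (inP_mono (m := `|N|%N%:Z)); first lia.
apply: inPD.
  have [t0 t1] := two_unit; apply: inPMu => //.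
  by rewrite -opprB; apply: inPN; apply: hM.
rewrite -[X in inP _ X _](addr0 (`|N|%N%:Z)); apply: inPM.
  by rewrite -opprB; apply: inPN; apply: hM.
by apply: inPD; apply: (inP_mono m0); [exact: lm | exact: ya].
Qed.


Lemma not_inP1_1 : ~ inP nu 1 1.
Proof. by case=> [/eqP|]; rewrite ?oner_eq0 // nu1. Qed.

Lemma unit1p x : inP nu 1 x -> 1 + x != 0 /\ nu (1 + x) = 0.
Proof.
move=> hx.
have nz : 1 + x != 0.
  apply/eqP=> e; have ex : x = -1 by apply/eqP; rewrite -subr_eq0 opprK addrC e.
  apply: not_inP1_1; have -> : (1 : F) = - x by rewrite ex opprK.
  exact: inPN.
split=> //.
have h0 : inP nu 0 (1 + x) by apply: inPD; [exact: inP1| exact: inP_mono hx].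
case: h0 => [/eqP|h0]; first by rewrite (negbTE nz).
apply/eqP; rewrite eq_le h0 andbT; rewrite leNgt; apply/negP => h1.
apply: not_inP1_1; have -> : (1 : F) = (1 + x) - x by rewrite addrK.
by apply: inPB => //; right.
Qed.

Lemma inPV1 m x : 1 <= m -> inP nu m x -> inP nu m ((1 + x)^-1 - 1).
Proof.
move=> m1 hx; have [nz nn] := unit1p (inP_mono m1 hx).
have -> : (1 + x)^-1 - 1 = (1 + x)^-1 * (- x).
  by apply: (mulfI nz); rewrite mulrBr mulfV // mulr1 mulrA mulfV // mul1r; ring.
apply: inPMu; first by rewrite invr_eq0.
  by rewrite nuV // nn.
exact: inPN.
Qed.

Lemma hensel2 (m : int) c : 1 <= m -> inP nu m (c - 1) ->
  exists r, r ^+ 2 = c /\ inP nu m (r - 1) /\ r != 0 /\ nu r = 0.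
Proof.
move=> m1 hc; have [r [r2 hr]] := hensel1 m1 hc.
exists r; split; first by rewrite r2 addrC subrK.
split=> //; have := unit1p (inP_mono m1 hr); by rewrite addrC subrK.
Qed.

Lemma normF_int eps p q : eps != 0 -> nu eps = 0 -> (forall a : F, a ^+ 2 != eps) ->
  p ^+ 2 - eps * q ^+ 2 = 1 -> inP nu 0 p /\ inP nu 0 q.
Proof.
move=> e0 ne nsq h.
have hp : inP nu 0 p.
  case: (eqVneq p 0) => [->|p0]; first exact: inP0.
  case: (lerP 0 (nu p)) => [|np]; first by right.
  exfalso.
  have q0 : q != 0.
    apply/eqP=> q0; move: h; rewrite q0 expr0n mulr0 subr0 expr2 => h.
    have := nuM HF p0 p0; rewrite h nu1; move: np; generalize (nu p) => a; lia.
  have hx : inP nu 1 (- (p^-1 * p^-1)).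
    apply: inPN; right; rewrite (nuM HF) ?invr_eq0 // nuV //; lia.
  have [r [r2 _]] := hensel1 (lexx 1) hx.
  apply: (negP (nsq (r * p / q))); apply/eqP.
  have hq : eps * q ^+ 2 = p ^+ 2 - 1 by rewrite -h opprB addrC subrK.
  have -> : eps = (p ^+ 2 - 1) / q ^+ 2 by rewrite -hq mulfK // expf_neq0.
  rewrite !exprMn r2 exprVn; field; by rewrite p0 q0.
split=> //.
case: (eqVneq q 0) => [->|q0]; first exact: inP0.
right.
have hq : eps * q ^+ 2 = p ^+ 2 - 1 by rewrite -h opprB addrC subrK.
have : inP nu 0 (p ^+ 2 - 1) by apply: inPB; [rewrite expr2 -[0](addr0 0); apply: inPM| exact: inP1].
rewrite -hq; case=> [/eqP|]; first by rewrite mulf_eq0 (negbTE e0) expf_eq0 (negbTE q0) andbF.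
rewrite (nuM HF) ?expf_neq0 // ne add0r expr2 (nuM HF) //; generalize (nu q) => a; lia.
Qed.

End FF.

Section EE.
Variables (F E : fieldType) (nu : F -> int) (iota : {rmorphism F -> E})
    (eps : F) (s : E) (sigma : {rmorphism E -> E}).
Hypothesis HF : nonarch_local_field nu.
Hypothesis HE : unram_quad nu iota eps s sigma.

Local Notation PE := (pE nu iota s).

Lemma iota_inj : injective iota. Proof. exact: fmorph_inj. Qed.

Lemma s_sq' : s ^+ 2 = iota eps. Proof. exact: s_sq HE. Qed.

Lemma s_notF a : s != iota a.
Proof.
apply/eqP=> e; apply: (negP (eps_nonsq HE a)); apply/eqP; apply: iota_inj.
by rewrite rmorphXn -e s_sq'.
Qed.

Lemma s_neq0 : s != 0.
Proof. by have := s_notF 0; rewrite rmorph0. Qed.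

Lemma rep_uniq a b a' b' : iota a + iota b * s = iota a' + iota b' * s -> a = a' /\ b = b'.
Proof.
move=> h; case: (eqVneq b b') => [eb|nb].
  by subst b'; split=> //; apply: iota_inj; move/addIr: h.
exfalso; apply: (negP (s_notF ((a - a') / (b' - b)))).
have nb' : iota (b' - b) != 0 by rewrite fmorph_eq0 subr_eq0 eq_sym.
apply/eqP; rewrite fmorph_div -[s](mulfK nb'); congr (_ / _); rewrite !rmorphB.
have h' : iota a + iota b * s - (iota a' + iota b' * s) = 0 by rewrite h subrr.
by apply/eqP; rewrite -subr_eq0; apply/eqP; rewrite -[RHS]oppr0 -h'; ring.
Qed.

Lemma sigma_rep a b : sigma (iota a + iota b * s) = iota a - iota b * s.
Proof. by rewrite rmorphD rmorphM !(sigma_F HE) (sigma_s HE) mulrN. Qed.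

Lemma pE0 n : PE n 0.
Proof. by exists 0, 0; rewrite rmorph0 mul0r addr0; split=> //; split; left. Qed.

Lemma pE_iota n a : inP nu n a -> PE n (iota a).
Proof. by move=> h; exists a, 0; rewrite rmorph0 mul0r addr0; split=> //; split=> //; left. Qed.

Lemma pE1 : PE 0 1.
Proof. by have := pE_iota (n := 0) (inP1 HF); rewrite rmorph1. Qed.

Lemma pE_iotas n a : inP nu n a -> PE n (iota a * s).
Proof. by move=> h; exists 0, a; rewrite rmorph0 add0r; split=> //; split=> //; left. Qed.

Lemma pEs : PE 0 s.
Proof. by have := pE_iotas (n := 0) (inP1 HF); rewrite rmorph1 mul1r. Qed.

Lemma pE_mono n m x : n <= m -> PE m x -> PE n x.
Proof. by move=> le [a [b [-> [ha hb]]]]; exists a, b; split=> //; split; apply: inP_mono ha || apply: inP_mono hb. Qed.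

Lemma pED n x y : PE n x -> PE n y -> PE n (x + y).
Proof.
move=> [a [b [-> [ha hb]]]] [a' [b' [-> [ha' hb']]]]; exists (a + a'), (b + b').
split; first by rewrite !rmorphD; ring.
by split; apply: inPD.
Qed.

Lemma pEN n x : PE n x -> PE n (- x).
Proof.
move=> [a [b [-> [ha hb]]]]; exists (- a), (- b).
split; first by rewrite !rmorphN; ring.
by split; apply: inPN.
Qed.

Lemma pEB n x y : PE n x -> PE n y -> PE n (x - y).
Proof. by move=> hx hy; apply: pED => //; apply: pEN. Qed.

Lemma pEM n m x y : PE n x -> PE m y -> PE (n + m) (x * y).
Proof.
move=> [a [b [-> [ha hb]]]] [a' [b' [-> [ha' hb']]]].
exists (a * a' + eps * (b * b')), (a * b' + b * a').
split; first by rewrite !rmorphD !rmorphM -s_sq'; ring.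
have [e0 ne] := eps_unit HE.
split; apply: (inPD HF); try by apply: (inPM HF).
by apply: (inPMu HF) => //; apply: (inPM HF).
Qed.

Lemma pEM0l n x y : PE 0 x -> PE n y -> PE n (x * y).
Proof. by move=> hx hy; have := pEM hx hy; rewrite add0r. Qed.

Lemma pEM0r n x y : PE n x -> PE 0 y -> PE n (x * y).
Proof. by move=> hx hy; have := pEM hx hy; rewrite addr0. Qed.

Lemma pE_sigma n x : PE n x -> PE n (sigma x).
Proof.
move=> [a [b [-> [ha hb]]]]; exists a, (- b); rewrite sigma_rep rmorphN mulNr.
by split=> //; split=> //; apply: inPN.
Qed.

Lemma pE_iota_inv n a : PE n (iota a) -> inP nu n a.
Proof.
move=> [a' [b' [e [ha hb]]]].
have [-> _] // : a = a' /\ (0:F) = b'.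
by apply: rep_uniq; rewrite rmorph0 mul0r addr0.
Qed.

Lemma pE_iotas_inv n a : PE n (iota a * s) -> inP nu n a.
Proof.
move=> [a' [b' [e [ha hb]]]].
have [_ ->] // : (0:F) = a' /\ a = b'.
by apply: rep_uniq; rewrite rmorph0 add0r.
Qed.

Lemma trace0 m : sigma m = - m -> exists b, m = iota b * s.
Proof.
have [a [b ->]] := E_span HE m; rewrite sigma_rep => h.
exists b; suff -> : a = 0 by rewrite rmorph0 add0r.
have [t0 _] := two_unit HF.
have : iota (2 * a) = 0.
  rewrite rmorphM rmorphMn rmorph1; apply/eqP; rewrite -subr_eq0; apply/eqP.
  rewrite -[X in _ = X](subrr (iota a - iota b * s)) {2}h; ring.
by move/eqP; rewrite fmorph_eq0 mulf_eq0 (negbTE t0) /= => /eqP.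
Qed.

Lemma norm_rep a b : (iota a + iota b * s) * sigma (iota a + iota b * s)
   = iota (a ^+ 2 - eps * b ^+ 2).
Proof. by rewrite sigma_rep rmorphB !rmorphM ?rmorphXn -s_sq'; ring. Qed.

Lemma normF x : exists N, x * sigma x = iota N.
Proof. have [a [b ->]] := E_span HE x; eexists; exact: norm_rep. Qed.

Lemma norm1_int x : x * sigma x = 1 -> PE 0 x.
Proof.
have [a [b ->]] := E_span HE x; rewrite norm_rep -(rmorph1 iota) => /iota_inj h.
have [e0 ne] := eps_unit HE.
have [ha hb] := normF_int HF e0 ne (eps_nonsq HE) h.
by exists a, b.
Qed.

End EE.


Section MX.
Variable (E : fieldType).

Lemma ord2 (i : 'I_2) : i = 0 \/ i = 1.
Proof. case: i => [[|[|i]] Hi]; [left|right|by []]; exact: val_inj. Qed.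

Lemma mx2E00 (a b c d : E) : mx2 a b c d 0 0 = a. Proof. by rewrite mxE. Qed.
Lemma mx2E01 (a b c d : E) : mx2 a b c d 0 1 = b. Proof. by rewrite mxE. Qed.
Lemma mx2E10 (a b c d : E) : mx2 a b c d 1 0 = c. Proof. by rewrite mxE. Qed.
Lemma mx2E11 (a b c d : E) : mx2 a b c d 1 1 = d. Proof. by rewrite mxE. Qed.
Definition mx2E := (mx2E00, mx2E01, mx2E10, mx2E11).

Lemma mx2_eta (M : 'M[E]_2) : M = mx2 (M 0 0) (M 0 1) (M 1 0) (M 1 1).
Proof.
apply/matrixP=> i j; case: (ord2 i) => ->; case: (ord2 j) => ->; by rewrite mx2E.
Qed.

Lemma mx2_eq (a b c d a' b' c' d' : E) :
  mx2 a b c d = mx2 a' b' c' d' -> [/\ a = a', b = b', c = c' & d = d'].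
Proof. by move=> h; split; [move: (congr1 (fun M : 'M[E]_2 => M 0 0) h)|move: (congr1 (fun M : 'M[E]_2 => M 0 1) h)
  |move: (congr1 (fun M : 'M[E]_2 => M 1 0) h)|move: (congr1 (fun M : 'M[E]_2 => M 1 1) h)]; rewrite /= !mx2E. Qed.

Lemma mul_mx2 (a b c d a' b' c' d' : E) :
  mx2 a b c d *m mx2 a' b' c' d' =
  mx2 (a * a' + b * c') (a * b' + b * d') (c * a' + d * c') (c * b' + d * d').
Proof.
apply/matrixP=> i j; rewrite !mxE !big_ord_recr big_ord0 /= add0r !mxE /=.
by case: (ord2 i) => ->; case: (ord2 j) => ->.
Qed.

Lemma add_mx2 (a b c d a' b' c' d' : E) :
  mx2 a b c d + mx2 a' b' c' d' = mx2 (a + a') (b + b') (c + c') (d + d').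
Proof.
apply/matrixP=> i j; rewrite !mxE.
by case: (ord2 i) => ->; case: (ord2 j) => ->.
Qed.

Lemma opp_mx2 (a b c d : E) : - mx2 a b c d = mx2 (- a) (- b) (- c) (- d).
Proof.
apply/matrixP=> i j; rewrite !mxE.
by case: (ord2 i) => ->; case: (ord2 j) => ->.
Qed.

Lemma scalar_mx2 (l : E) : l%:M = mx2 l 0 0 l.
Proof.
apply/matrixP=> i j; rewrite !mxE.
by case: (ord2 i) => ->; case: (ord2 j) => ->.
Qed.

Lemma tr_mx2 (a b c d : E) : \tr (mx2 a b c d) = a + d.
Proof. by rewrite /mxtrace !big_ord_recr big_ord0 /= add0r !mxE. Qed.

Variable sigma : {rmorphism E -> E}.

Lemma adjm_mx2 (a b c d : E) : adjm sigma (mx2 a b c d) = mx2 (sigma a) (sigma c) (sigma b) (sigma d).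
Proof.
apply/matrixP=> i j; rewrite !mxE.
by case: (ord2 i) => ->; case: (ord2 j) => ->.
Qed.

Lemma adjm_mul (A B : 'M[E]_2) : adjm sigma (A *m B) = adjm sigma B *m adjm sigma A.
Proof. by rewrite /adjm map_mxM trmx_mul. Qed.

Lemma inG_mul g h : inG sigma g -> inG sigma h -> inG sigma (g *m h).
Proof.
rewrite /inG adjm_mul => hg hh.
by rewrite !mulmxA -(mulmxA (adjm sigma h) (adjm sigma g)) -(mulmxA (adjm sigma h) _ g) hg.
Qed.

Lemma inG_aa (sigK : forall x, sigma (sigma x) = x) (a b c : E) :
  inG sigma (mx2 a b c a) <->
  [/\ sigma c * a + sigma a * c = 0, sigma c * b + sigma a * a = 1 & sigma a * b + sigma b * a = 0].
Proof.
rewrite /inG /wform adjm_mx2 !mul_mx2 !mulr0 !mulr1 !add0r !addr0.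
split.
  by move/mx2_eq=> [h1 h2 h3 h4]; split.
move=> [h1 h2 h3]; rewrite h1 h2 h3.
have h4 : sigma (sigma c * b + sigma a * a) = 1 by rewrite h2 rmorph1.
rewrite rmorphD !rmorphM !sigK in h4.
by rewrite mulrC [sigma b * c]mulrC addrC h4.
Qed.

End MX.


Section MAIN.
Variables (F E : fieldType) (nu : F -> int) (iota : {rmorphism F -> E})
    (eps : F) (s : E) (sigma : {rmorphism E -> E}) (psi : E -> algC).
Hypothesis HF : nonarch_local_field nu.
Hypothesis HE : unram_quad nu iota eps s sigma.
Hypothesis Hpsi : add_char nu iota s psi.
Variables (d : nat) (z u v : F).
Hypothesis hd : (0 < d)%N.
Hypothesis hz : inP nu (- Posz (uphalf d) + 1) z.
Hypothesis hv : inP nu (- Posz (uphalf d) + 1) v.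
Hypothesis hu0 : u != 0.
Hypothesis hnu : nu u = - Posz d.

Local Notation PE := (pE nu iota s).
Local Notation n := (Posz (uphalf d)).
Local Notation n' := (Posz (uphalf d.+1)).
Local Notation X := (mx2 (iota z * s) (iota u * s) (iota v * s) (iota z * s)).
Local Notation Xu := (mx2 0 (iota u * s) 0 0).

Lemma lev : [/\ 1 <= n, n <= n', n' <= n + 1 & n + n' = Posz d + 1].
Proof.
have h1 := uphalf_half d; have h2 : uphalf d.+1 = (d./2).+1 by [].
have h3 := odd_double_half d; have h4 := leq_b1 (odd d).
rewrite -muln2 in h3; rewrite h1 h2.
move: h3 h4 hd; generalize (odd d : nat) (d./2) => o h h3 h4 h5.
split; lia.
Qed.

Lemma sigK x : sigma (sigma x) = x.
Proof.
have [a [b ->]] := E_span HE x; rewrite !(sigma_rep HE) //.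
by rewrite rmorphB rmorphM (sigma_F HE) (sigma_F HE) (sigma_s HE) mulrN opprK.
Qed.

Lemma PD n0 x y : PE n0 x -> PE n0 y -> PE n0 (x + y). Proof. by move=> *; apply: pED. Qed.
Lemma PN n0 x : PE n0 x -> PE n0 (- x). Proof. by move=> *; apply: pEN. Qed.
Lemma PB n0 x y : PE n0 x -> PE n0 y -> PE n0 (x - y). Proof. by move=> *; apply: pEB. Qed.
Lemma PM n1 n2 x y : PE n1 x -> PE n2 y -> PE (n1 + n2) (x * y). Proof. move=> h1 h2; exact: (pEM HF HE h1 h2). Qed.
Lemma PM0l n0 x y : PE 0 x -> PE n0 y -> PE n0 (x * y). Proof. move=> h1 h2; exact: (pEM0l HF HE h1 h2). Qed.
Lemma PM0r n0 x y : PE n0 x -> PE 0 y -> PE n0 (x * y). Proof. move=> h1 h2; exact: (pEM0r HF HE h1 h2). Qed.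
Lemma Pmono n1 n2 x : n1 <= n2 -> PE n2 x -> PE n1 x. Proof. move=> h1 h2; exact: (pE_mono h1 h2). Qed.
Lemma Psig n0 x : PE n0 x -> PE n0 (sigma x). Proof. move=> h; exact: (pE_sigma HF HE h). Qed.
Lemma Piota n0 a : inP nu n0 a -> PE n0 (iota a). Proof. move=> h; exact: (pE_iota iota s h). Qed.
Lemma Piotas n0 a : inP nu n0 a -> PE n0 (iota a * s). Proof. move=> h; exact: (pE_iotas iota s h). Qed.
Lemma Piota_inv n0 a : PE n0 (iota a) -> inP nu n0 a. Proof. move=> h; exact: (pE_iota_inv HE h). Qed.
Lemma Piotas_inv n0 a : PE n0 (iota a * s) -> inP nu n0 a. Proof. move=> h; exact: (pE_iotas_inv HE h). Qed.
Lemma P0 n0 : PE n0 0. Proof. exact: (pE0 nu iota s n0). Qed.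
Lemma P1 : PE 0 1. Proof. exact: (pE1 iota s HF). Qed.
Lemma Ps : PE 0 s. Proof. exact: (pEs iota s HF). Qed.
Lemma IPD n0 x y : inP nu n0 x -> inP nu n0 y -> inP nu n0 (x + y). Proof. by move=> *; apply: inPD. Qed.
Lemma IPB n0 x y : inP nu n0 x -> inP nu n0 y -> inP nu n0 (x - y). Proof. by move=> *; apply: inPB. Qed.
Lemma IPN n0 x : inP nu n0 x -> inP nu n0 (- x). Proof. by move=> *; apply: inPN. Qed.
Lemma IPM n1 n2 x y : inP nu n1 x -> inP nu n2 y -> inP nu (n1 + n2) (x * y). Proof. by move=> *; apply: inPM. Qed.
Lemma IPmono n1 n2 x : n1 <= n2 -> inP nu n2 x -> inP nu n1 x. Proof. move=> h1 h2; exact: (inP_mono h1 h2). Qed.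

Lemma pEM_le (n0 n1 n2 : int) x y : n0 <= n1 + n2 -> PE n1 x -> PE n2 y -> PE n0 (x * y).
Proof. move=> le h1 h2; apply: (Pmono le); exact: PM. Qed.

Lemma vu_lev : inP nu n' (v / u).
Proof.
have hu : inP nu (Posz d) (u^-1) by right; rewrite nuV // hnu opprK.
have := IPM hv hu; apply: IPmono; have [_ _ _ e] := lev; lia.
Qed.


Lemma Gaa a b c : inG sigma (mx2 a b c a) <->
  [/\ sigma c * a + sigma a * c = 0, sigma c * b + sigma a * a = 1 & sigma a * b + sigma b * a = 0].
Proof. exact: inG_aa sigK a b c. Qed.

Lemma inv_aa a b c : inG sigma (mx2 a b c a) ->
  inG sigma (mx2 (sigma a) (sigma b) (sigma c) (sigma a)) /\ mx2 a b c a *m mx2 (sigma a) (sigma b) (sigma c) (sigma a) = 1%:M.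
Proof.
move/Gaa=> [g1 g2 g3].
have g2' : c * sigma b + a * sigma a = 1.
  by have := congr1 sigma g2; rewrite rmorphD !rmorphM !sigK rmorph1.
split.
  apply/Gaa; rewrite !sigK; split=> //.
    by rewrite mulrC [a * _]mulrC addrC.
  by rewrite mulrC [b * _]mulrC addrC.
rewrite mul_mx2 scalar_mx2; congr mx2 => //.
- by rewrite mulrC [b * _]mulrC addrC.
- by rewrite mulrC [b * _]mulrC addrC.
- by rewrite mulrC [a * _]mulrC addrC.
Qed.

Lemma J_mul j1 j2 : inJ nu iota s sigma d j1 -> inJ nu iota s sigma d j2 ->
  inJ nu iota s sigma d (j1 *m j2).
Proof.
have [l1 l2 l3 l4] := lev.
move=> [G1 [a [b [c [e [Ej1 [ha [hb [hc he]]]]]]]]].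
move=> [G2 [a' [b' [c' [e' [Ej2 [ha' [hb' [hc' he']]]]]]]]].
subst j1 j2; rewrite /inJ; split; first exact: inG_mul.
exists (a * a' + b * c'), (a * b' + b * e'), (c * a' + e * c'), (c * b' + e * e').
split; first exact: mul_mx2.
split.
  have -> : a * a' + b * c' - 1 = (a - 1) * (a' - 1) + (a - 1) + (a' - 1) + b * c' by ring.
  apply: PD; last by apply: (pEM_le _ hb hc'); lia.
  by apply: PD => //; apply: PD => //; apply: (pEM_le _ ha ha'); lia.
split.
  have -> : a * b' + b * e' = (a - 1) * b' + b' + b * (e' - 1) + b by ring.
  apply: PD => //; apply: PD; last by apply: (pEM_le _ hb he'); lia.
  by apply: PD => //; apply: (pEM_le _ ha hb'); lia.
split.
  have -> : c * a' + e * c' = c * (a' - 1) + c + (e - 1) * c' + c' by ring.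
  apply: PD => //; apply: PD; last by apply: (pEM_le _ he hc'); lia.
  by apply: PD => //; apply: (pEM_le _ hc ha'); lia.
have -> : c * b' + e * e' - 1 = c * b' + (e - 1) * (e' - 1) + (e - 1) + (e' - 1) by ring.
apply: PD => //; apply: PD => //; apply: PD; first by apply: (pEM_le _ hc hb'); lia.
by apply: (pEM_le _ he he'); lia.
Qed.

Lemma part1 k : inJ nu iota s sigma d k -> PsiY psi X k = PsiY psi Xu k.
Proof.
have [l1 l2 l3 l4] := lev.
move=> [_ [a [b [c [e [-> [ha [hb [hc he]]]]]]]]].
rewrite /PsiY scalar_mx2 opp_mx2 add_mx2 !mul_mx2 !tr_mx2 !oppr0 !addr0.
set D := iota z * s * (a - 1) + iota v * s * b + iota z * s * (e - 1).
have -> : iota z * s * (a - 1) + iota u * s * c + (iota v * s * b + iota z * s * (e - 1))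
   = (0 * (a - 1) + iota u * s * c + (0 * b + 0 * (e - 1))) + D by rewrite /D; ring.
suff hD : PE 1 D by rewrite (psiD Hpsi _ D) (psi_pE Hpsi hD) mulr1.
have hzs : PE (- n + 1) (iota z * s) by apply: PM0r; [apply: Piota|apply: Ps].
have hvs : PE (- n + 1) (iota v * s) by apply: PM0r; [apply: Piota|apply: Ps].
rewrite /D; apply: PD; first apply: PD.
- by apply: (pEM_le _ hzs ha); lia.
- by apply: (pEM_le _ hvs hb); lia.
- by apply: (pEM_le _ hzs he); lia.
Qed.


Lemma TX_sub k : inT nu iota s sigma X k ->
  exists t j, inT nu iota s sigma Xu t /\ inJ nu iota s sigma d j /\ k = t *m j.
Proof.
have [l1 l2 l3 l4] := lev.
have l1' : 1 <= n' by lia.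
move=> [[kG kK] kc].
have ha := kK 0 0; have hb := kK 0 1; have hc0 := kK 1 0; have he := kK 1 1.
set a := k 0 0 in ha; set b := k 0 1 in hb; set c := k 1 0 in hc0; set e := k 1 1 in he.
have ek : k = mx2 a b c e by exact: mx2_eta.
rewrite ek in kG kc *; clearbody a b c e; clear ek kK k.
have usn0 : iota u * s != 0 by rewrite mulf_neq0 ?fmorph_eq0 ?(s_neq0 HE).
move: kc; rewrite !mul_mx2 => /mx2_eq [h00 h01 _ _].
have ae : e = a.
  apply: (mulIf usn0); apply: (addIr (b * (iota z * s))); rewrite h01; ring.
subst e.
have ch : c = iota (v / u) * b.
  apply: (mulIf usn0).
  have h : iota u * s * c = b * (iota v * s).
    by apply: (addrI (iota z * s * a)); rewrite -h00; ring.
  rewrite mulrC h fmorph_div; field; by rewrite fmorph_eq0.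
subst c.
have hc : PE n' (iota (v / u) * b) by apply: PM0r => //; apply: Piota; exact: vu_lev.
have kG' := kG.
move/Gaa: kG => [g1 g2 g3].
have [N0 hN0] := normF HE a.
have hN : inP nu n' (N0 - 1).
  apply: Piota_inv; rewrite rmorphB rmorph1 -hN0.
  have -> : a * sigma a - 1 = - (sigma (iota (v / u) * b) * b) by rewrite -g2; ring.
  by apply: PN; apply: PM0r => //; apply: Psig.
have [r [r2 [hr [r0 nr]]]] := hensel2 HF l1' hN.
have hri : inP nu n' (r^-1 - 1).
  by have := inPV1 HF l1' hr; rewrite [1 + _]addrC subrK.
set lam := a * iota (r^-1).
have hlam : sigma lam * lam = 1.
  rewrite /lam rmorphM (sigma_F HE).
  have -> : sigma a * iota r^-1 * (a * iota r^-1) = (a * sigma a) * iota (r^-1 * r^-1).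
    by rewrite rmorphM; ring.
  by rewrite hN0 -rmorphM -r2 expr2 mulrACA !mulfV // mulr1 rmorph1.
have hla : PE n' (lam - a).
  have -> : lam - a = a * iota (r^-1 - 1) by rewrite /lam rmorphB rmorph1; ring.
  by apply: PM0l => //; apply: Piota.
have hl0 : PE 0 lam.
  have -> : lam = a + (lam - a) by ring.
  by apply: PD => //; apply: (Pmono _ hla); lia.
set m := sigma a * b.
set mu := lam * m.
have hsm : sigma m = - m.
  rewrite /m rmorphM sigK; apply: (addIr (sigma a * b)); rewrite addNr -g3; ring.
have hmu0 : PE 0 mu by apply: PM0l => //; apply: PM0l => //; apply: Psig.
have tc : sigma lam * mu + sigma mu * lam = 0 by rewrite /mu rmorphM hsm; ring.
have tG : inG sigma (mx2 lam mu 0 lam).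
  by apply/Gaa; rewrite rmorph0 !mul0r mulr0 !add0r; split.
have [tinvG tinv1] := inv_aa tG.
rewrite rmorph0 in tinvG tinv1.
exists (mx2 lam mu 0 lam), (mx2 (sigma lam) (sigma mu) 0 (sigma lam) *m mx2 a b (iota (v / u) * b) a).
split.
  split; last by rewrite !mul_mx2; congr mx2; ring.
  split=> // i j; case: (ord2 i) => ->; case: (ord2 j) => ->; rewrite mx2E //.
  exact: P0.
split; last by rewrite mulmxA tinv1 mul1mx.
split; first exact: inG_mul tinvG kG'.
eexists _, _, _, _; split; first exact: mul_mx2.
have e2 : sigma (iota (v / u) * b) * b = 1 - sigma a * a by rewrite -g2 addrK.
have hal : PE n' (a - lam) by rewrite -opprB; apply: PN.
split.
  have -> : sigma lam * a + sigma mu * (iota (v / u) * b) - 1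
     = sigma lam * (a - lam) + sigma mu * (iota (v / u) * b) by rewrite -hlam; ring.
  apply: (Pmono l2); apply: PD; apply: PM0l => //; apply: Psig => //.
split.
  have -> : sigma lam * b + sigma mu * a = sigma lam * b * (sigma (iota (v / u) * b) * b).
    by rewrite e2 /mu rmorphM hsm /m; ring.
  apply: (Pmono l2); apply: PM0l; first by apply: PM0l => //; apply: Psig.
  by apply: PM0r => //; apply: Psig.
split.
  by rewrite mul0r add0r; apply: PM0l => //; apply: Psig.
have -> : 0 * b + sigma lam * a - 1 = sigma lam * (a - lam) by rewrite -hlam; ring.
by apply: (Pmono l2); apply: PM0l => //; apply: Psig.
Qed.


Lemma TXu_form t : inT nu iota s sigma Xu t ->
  exists lam mu, [/\ t = mx2 lam mu 0 lam, PE 0 lam, PE 0 mu,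
     sigma lam * lam = 1 & sigma lam * mu + sigma mu * lam = 0].
Proof.
move=> [[tG tK] tc].
have hl := tK 0 0; have hm := tK 0 1; have he := tK 1 1.
set lam := t 0 0 in hl; set mu := t 0 1 in hm; set c := t 1 0; set e := t 1 1 in he.
have ek : t = mx2 lam mu c e by exact: mx2_eta.
rewrite ek in tG tc *; clearbody lam mu c e; clear ek tK t.
have usn0 : iota u * s != 0 by rewrite mulf_neq0 ?fmorph_eq0 ?(s_neq0 HE).
move: tc; rewrite !mul_mx2 => /mx2_eq [h00 h01 _ _].
have c0 : c = 0.
  apply/eqP; move: h00; rewrite !mulr0 !mul0r !add0r => /esym/eqP.
  by rewrite mulf_eq0 (negbTE usn0).
subst c.
have le : e = lam.
  by apply: (mulIf usn0); move: h01; rewrite !mulr0 !mul0r !add0r addr0 => ->; rewrite mulrC.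
subst e.
move/Gaa: (tG) => [g1 g2 g3].
exists lam, mu; split=> //.
by move: g2; rewrite rmorph0 mul0r add0r.
Qed.

Lemma TXu_sub t : inT nu iota s sigma Xu t ->
  exists k j, inT nu iota s sigma X k /\ inJ nu iota s sigma d j /\ t = k *m j.
Proof.
have [l1 l2 l3 l4] := lev.
have l1' : 1 <= n' by lia.
move=> /TXu_form [lam [mu [-> hl hmu0 hlam g3]]].
set m := sigma lam * mu.
have hsm : sigma m = - m.
  rewrite /m rmorphM sigK; apply: (addIr (sigma lam * mu)); rewrite addNr -g3; ring.
have [b0 hb0] := trace0 HF HE hsm.
have hm : PE 0 m by apply: PM0l => //; apply: Psig.
have ib0 : inP nu 0 b0 by apply: Piotas_inv; rewrite -hb0.
have [e0 ne] := eps_unit HE.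
set x := v / u * (b0 ^+ 2 * eps).
have hx : inP nu n' x.
  rewrite /x -[n']addr0; apply: IPM; first exact: vu_lev.
  rewrite mulrC; apply: (inPMu HF) => //; rewrite expr2 -[0 : int](addr0 0); exact: IPM.
have [r [r2 [hr [r0 nr]]]] := hensel2 HF l1' (c := 1 + x) (ltac:(by rewrite addrAC subrr add0r)).
have ir : inP nu 0 r.
  have -> : r = (r - 1) + 1 by rewrite subrK.
  by apply: IPD; [apply: (IPmono _ hr); lia| exact: (inP1 HF)].
set al := lam * iota r.
set cc := iota (v / u) * mu.
have hmu : mu = lam * m by rewrite /m mulrA [lam * _]mulrC hlam mul1r.
have hmm : sigma mu * mu = - iota (b0 ^+ 2 * eps).
  rewrite hmu rmorphM hsm hb0 rmorphM rmorphXn -(s_sq HE).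
  have -> : sigma lam * - (iota b0 * s) * (lam * (iota b0 * s)) = - (sigma lam * lam) * (iota b0 * s) ^+ 2 by ring.
  by rewrite hlam; ring.
have hvu : iota (v / u) * iota u = iota v by rewrite fmorph_div mulfVK // fmorph_eq0.
have hcc : PE n' cc by apply: PM0r => //; apply: Piota; exact: vu_lev.
have hal : PE 0 al by apply: PM0l => //; apply: Piota.
have kG : inG sigma (mx2 al mu cc al).
  apply/Gaa; rewrite /al /cc !(rmorphM sigma) !(sigma_F HE); split.
  - have -> : iota (v / u) * sigma mu * (lam * iota r) + sigma lam * iota r * (iota (v / u) * mu)
       = iota (v / u) * iota r * (sigma lam * mu + sigma mu * lam) by ring.
    by rewrite g3 mulr0.
  - have -> : iota (v / u) * sigma mu * mu + sigma lam * iota r * (lam * iota r)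
       = iota (v / u) * (sigma mu * mu) + (sigma lam * lam) * iota (r ^+ 2) by rewrite rmorphXn; ring.
    by rewrite hmm hlam r2 rmorphD rmorph1 /x rmorphM; ring.
  - have -> : sigma lam * iota r * mu + sigma mu * (lam * iota r)
       = iota r * (sigma lam * mu + sigma mu * lam) by ring.
    by rewrite g3 mulr0.
have [kinvG kinv1] := inv_aa kG.
exists (mx2 al mu cc al), (mx2 (sigma al) (sigma mu) (sigma cc) (sigma al) *m mx2 lam mu 0 lam).
split.
  split.
    split=> // i j; case: (ord2 i) => ->; case: (ord2 j) => ->; rewrite mx2E //.
    by apply: (Pmono _ hcc); lia.
  rewrite !mul_mx2 /cc; congr mx2; rewrite -?hvu; ring.
split; last by rewrite mulmxA kinv1 mul1mx.
split.
  apply: inG_mul => //; apply/Gaa; rewrite rmorph0 !mul0r mulr0 !add0r; split=> //.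
eexists _, _, _, _; split; first exact: mul_mx2.
have hsal : sigma al = sigma lam * iota r by rewrite /al rmorphM (sigma_F HE).
have hscc : sigma cc = iota (v / u) * sigma mu by rewrite /cc rmorphM (sigma_F HE).
have hr1 : PE n' (iota (r - 1)) by apply: Piota.
split.
  have -> : sigma al * lam + sigma mu * 0 - 1 = iota (r - 1).
    by rewrite hsal rmorphB rmorph1 mulr0 addr0 mulrAC hlam mul1r.
  exact: (Pmono l2).
split.
  have -> : sigma al * mu + sigma mu * lam = iota (r - 1) * (sigma lam * mu).
    by rewrite hsal rmorphB rmorph1; apply/eqP; rewrite -subr_eq0 -g3; apply/eqP; ring.
  by apply: (Pmono l2); apply: PM0r => //; apply: PM0l => //; apply: Psig.
split.
  rewrite hscc mulr0 addr0 -mulrA; apply: PM0r => //; first by apply: Piota; exact: vu_lev.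
  by apply: PM0l => //; apply: Psig.
have -> : sigma cc * mu + sigma al * lam - 1 = iota (r - 1 - x).
  rewrite hscc hsal -mulrA hmm [sigma lam * iota r * lam]mulrAC hlam mul1r /x !rmorphB !rmorphM rmorph1; ring.
by apply: (Pmono l2); apply: Piota; apply: IPB.
Qed.


Lemma TXu_ZU t : inT nu iota s sigma Xu t <->
  setmul (inZ sigma) (inU nu iota s sigma) t.
Proof.
split.
  move=> /TXu_form [lam [mu [-> hl hmu0 hlam g3]]].
  set m := sigma lam * mu.
  have hsm : sigma m = - m.
    rewrite /m rmorphM sigK; apply: (addIr (sigma lam * mu)); rewrite addNr -g3; ring.
  have [b0 hb0] := trace0 HF HE hsm.
  have hm : PE 0 m by apply: PM0l => //; apply: Psig.
  exists (lam%:M), (mx2 1 (s * iota b0) 0 1).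
  split.
    split; first by exists lam.
    by rewrite scalar_mx2; apply/Gaa; rewrite rmorph0 !mul0r !mulr0 !add0r; split.
  split.
    split; first by exists b0.
    split.
      apply/Gaa; rewrite rmorph0 rmorph1 !mul0r !mulr0 !add0r mul1r mulr1; split=> //.
      by rewrite rmorphM (sigma_s HE) (sigma_F HE) mul1r mulNr subrr.
    move=> i j; case: (ord2 i) => ->; case: (ord2 j) => ->; rewrite mx2E.
    - exact: P1.
    - by rewrite mulrC -hb0.
    - exact: P0.
    - exact: P1.
  rewrite scalar_mx2 mul_mx2 !mulr0 !mul0r !addr0 !add0r mulr1; congr mx2.
  by rewrite [s * _]mulrC -hb0 /m mulrA [lam * _]mulrC hlam mul1r.
move=> [zz [uu [[[l ->] zG] [[[b0 ->] [uG uK]] ->]]]].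
have hb : PE 0 (s * iota b0) by have := uK 0 1; rewrite mx2E.
move: (zG); rewrite scalar_mx2 => /Gaa [_ g2 _].
move: g2; rewrite rmorph0 mul0r add0r => g2.
have hl : PE 0 l by apply: (norm1_int HF HE); rewrite mulrC.
split.
  split; first by rewrite -scalar_mx2; apply: inG_mul.
  rewrite mul_mx2 => i j; case: (ord2 i) => ->; case: (ord2 j) => ->; rewrite mx2E.
  - by rewrite ?mulr1 ?mul0r ?mulr0 ?addr0 ?add0r.
  - by rewrite ?mulr1 ?mul0r ?mulr0 ?addr0 ?add0r; apply: PM0l.
  - by rewrite ?mulr1 ?mul0r ?mulr0 ?addr0 ?add0r; exact: P0.
  - by rewrite ?mulr1 ?mul0r ?mulr0 ?addr0 ?add0r.
by rewrite !mul_mx2; congr mx2; ring.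
Qed.

End MAIN.


Unset Implicit Arguments.

Theorem lemma5p9 (F E : fieldType) (nu : F -> int) (iota : {rmorphism F -> E})
    (eps : F) (s : E) (sigma : {rmorphism E -> E}) (psi : E -> algC)
    (HF : nonarch_local_field nu) (HE : unram_quad nu iota eps s sigma)
    (Hpsi : add_char nu iota s psi)
    (d : nat) (z u v : F) :
  (0 < d)%N ->
  let X := mx2 (iota z * s) (iota u * s) (iota v * s) (iota z * s) in
  let Xu := mx2 0 (iota u * s) 0 0 in
  in_kfrak nu iota s sigma d X ->
  inP nu (- Posz (uphalf d) + 1) z ->
  inP nu (- Posz (uphalf d) + 1) v ->
  u != 0 -> nu u = - Posz d ->
  (forall k, inJ nu iota s sigma d k -> PsiY psi X k = PsiY psi Xu k) /\
  (forall g, setmul (inT nu iota s sigma X) (inJ nu iota s sigma d) g <->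
             setmul (inT nu iota s sigma Xu) (inJ nu iota s sigma d) g) /\
  (forall g, setmul (inT nu iota s sigma Xu) (inJ nu iota s sigma d) g <->
             setmul (setmul (inZ sigma) (inU nu iota s sigma)) (inJ nu iota s sigma d) g).
Proof.
move=> hd X Xu hk hz hv hu0 hnu.
have Jm := J_mul HF HE hd hu0 hnu.
split; first by move=> k hk'; exact: (part1 HF HE Hpsi hd hz hv hu0 hnu hk').
split.
  move=> g; split.
    move=> [k [j0 [hk1 [hj0 ->]]]].
    have [t [j1 [ht [hj1 ->]]]] := TX_sub HF HE hd hv hu0 hnu hk1.
    exists t, (j1 *m j0); split=> //; split; [exact: Jm | by rewrite mulmxA].
  move=> [t [j0 [ht [hj0 ->]]]].
  have [k [j1 [hk1 [hj1 ->]]]] := TXu_sub HF HE z hd hv hu0 hnu ht.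
  exists k, (j1 *m j0); split=> //; split; [exact: Jm | by rewrite mulmxA].
move=> g; split.
  move=> [t [j [ht [hj ->]]]]; exists t, j; split=> //; exact/(TXu_ZU HF HE hu0).
move=> [t [j [ht [hj ->]]]]; exists t, j; split=> //; exact/(TXu_ZU HF HE hu0).
Qed.
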